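(* Let $K$ be a field, $c\in K\setminus\{0\}$, $n\ge1$, let $f$ be a $c$-frieze of order $n$ over $K$, and put $s=f(0,n)$, $t=f(1,n+1)$. Then for every integer $k$ with $-1\le k\le n+2$ and every $i\in\mathbb{Z}$: (a) $f(2i,2i+k-1)=\dfrac{(-c)^k}{t}f(2i+k+1,2i+n+1)$; (b) $f(2i+1,2i+k)=\dfrac{(-c)^k}{s}f(2i+k+2,2i+n+2)$.
   Context: The $c$-continuant polynomials $P_k=P_k^c$ ($k\ge-1$) are defined by $P_{-1}=0$, $P_0=1$, and for $k\ge1$, $P_k(x_1,\dots,x_k)=x_kP_{k-1}(x_1,\dots,x_{k-1})+cP_{k-2}(x_1,\dots,x_{k-2})$. A family $(x_i)_{i\in\mathbb{Z}}$ in $K$ is $n$-admissible if $P_{n+2}(x_i,\dots,x_{i+n+1})=0$ for all $i$. Let $\mathbb{B}_n=\{(i,j)\in\mathbb{Z}^2:-2\le j-i\le n+1\}$. A $c$-frieze of order $n$ is a function $f:\mathbb{B}_n\to K$ for which there is an $n$-admissible family $(x_i)$ with $f(i,j)=P_{j-i+1}(x_i,\dots,x_j)$ for all $(i,j)\in\mathbb{B}_n$. Row $k$ of $f$ consists of the values $f(i,i+k-1)$; the lemma relates row $k$ to row $n-k+1$. It is known that $st=(-c)^{n+1}$, so $s,t\neq0$. *)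

(* Defs.v *)
From HB Require Import structures.
From mathcomp Require Import all_boot all_order all_algebra.
Set Implicit Arguments. Unset Strict Implicit. Unset Printing Implicit Defensive.
Import Order.TTheory GRing.Theory Num.Theory.
Local Open Scope ring_scope.

(* cont c x i k = P_k^c(x_i, x_{i+1}, ..., x_{i+k-1})  for k : nat *)
Fixpoint cont (K : fieldType) (c : K) (x : int -> K) (i : int) (k : nat) : K :=
  match k with
  | 0%N => 1
  | 1%N => x i
  | (k'.+1 as k1).+1 => x (i + k1%:Z) * cont c x i k1 + c * cont c x i k'
  end.

(* contZ c x i m = P_m^c(x_i, ..., x_{i+m-1}) for m : int, m >= -1,
   with P_{-1} = 0 (value 0 also for m < -1, never used). *)
Definition contZ (K : fieldType) (c : K) (x : int -> K) (i : int) (m : int) : K :=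
  match m with
  | Posz k => cont c x i k
  | Negz _ => 0
  end.

Definition admissible (K : fieldType) (c : K) (n : nat) (x : int -> K) : Prop :=
  forall i : int, cont c x i n.+2 = 0.

Definition inB (n : nat) (i j : int) : bool :=
  (-2 <= j - i) && (j - i <= n%:Z + 1).

Definition is_frieze (K : fieldType) (c : K) (n : nat) (f : int -> int -> K) : Prop :=
  exists x : int -> K, admissible c n x /\
    forall i j : int, inB n i j -> f i j = contZ c x i (j - i + 1).

(* Main.v *)
Require Import Defs.
From HB Require Import structures.
From mathcomp Require Import all_boot all_order all_algebra.
From mathcomp Require Import zify ring.
Import Order.TTheory GRing.Theory Num.Theory.
Local Open Scope ring_scope.

Section Aux.
Variables (K : fieldType) (c : K) (x : int -> K).

Lemma cont_bwd (L : nat) (i : int) :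
  cont c x i L.+2 = x i * cont c x (i+1) L.+1 + c * cont c x (i+2) L.
Proof.
move: i; elim: L {-2}L (leqnn L) => [|L IH] M hM i.
  move: hM; rewrite leqn0 => /eqP ->; rewrite /=.
  ring.
case: M hM => [|M] hM.
  rewrite /=; ring.
case: M hM => [|M] hM.
  rewrite /=.
  have -> : i + 1 + 1 = i + 2 by lia.
  idtac.
  ring.
have E1 := IH M.+1 hM i.
have E2 := IH M (leq_trans (leqnSn M) hM) i.
change (cont c x i M.+4) with
  (x (i + M.+3%:Z) * cont c x i M.+3 + c * cont c x i M.+2).
rewrite E1 E2.
change (cont c x (i+1) M.+3) with
  (x (i + 1 + M.+2%:Z) * cont c x (i+1) M.+2 + c * cont c x (i+1) M.+1).
change (cont c x (i+2) M.+2) with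
  (x (i + 2 + M.+1%:Z) * cont c x (i+2) M.+1 + c * cont c x (i+2) M).
have -> : i + 1 + M.+2%:Z = i + M.+3%:Z by lia.
have -> : i + 2 + M.+1%:Z = i + M.+3%:Z by lia.
ring.
Qed.

Lemma contZ_fwd (a : int) (m : nat) :
  contZ c x a (m.+1)%:Z = x (a + m%:Z) * contZ c x a m + c * contZ c x a (m%:Z - 1).
Proof.
case: m => [|m].
  by rewrite /= addr0; ring.
have -> : (m.+1%:Z - 1) = m%:Z by lia.
by [].
Qed.

Lemma contZ_bwd (a : int) (m : nat) :
  contZ c x a (m.+1)%:Z = x a * contZ c x (a+1) m + c * contZ c x (a+2) (m%:Z - 1).
Proof.
case: m => [|m].
  by rewrite /=; ring.
have -> : (m.+1%:Z - 1) = m%:Z by lia.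
exact: cont_bwd.
Qed.

Variable n : nat.
Hypothesis adm : admissible c n x.

Definition pp (a : int) := cont c x (a + 1) n.+1.

Lemma key (a : int) (m0 : nat) : (m0 <= n.+3)%N ->
  (- c) * pp a * contZ c x a (m0%:Z - 1)
  = (- c) ^+ m0 * contZ c x (a + m0%:Z) (n%:Z + 2 - m0%:Z).
Proof.
suff H : forall m, ((m <= n.+3)%N -> (- c) * pp a * contZ c x a (m%:Z - 1)
  = (- c) ^+ m * contZ c x (a + m%:Z) (n%:Z + 2 - m%:Z)) /\
  ((m.+1 <= n.+3)%N -> (- c) * pp a * contZ c x a (m.+1%:Z - 1)
  = (- c) ^+ m.+1 * contZ c x (a + m.+1%:Z) (n%:Z + 2 - m.+1%:Z)).
  by case: (H m0).
clear m0.
elim=> [|m [IH1 IH2]].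
  split=> _.
    have -> : ((0%N)%:Z - 1 : int) = Negz 0 by [].
    rewrite /= addr0 mulr0 mul1r.
    have -> : (n + (1 + 1) + 0 = n.+2)%N by lia.
    by rewrite (adm a).
  have -> : (1%N%:Z - 1 : int) = 0 by [].
  have -> : n%:Z + 2 - 1%N%:Z = n.+1%:Z by lia.
  by rewrite /= expr1 mulr1.
split; first exact: IH2.
move=> hm.
have h1 := IH1 (leq_trans (leqnSn _) (leq_trans (leqnSn _) hm)).
have h2 := IH2 (leq_trans (leqnSn _) hm).
have -> : (m.+2%:Z - 1) = m.+1%:Z by lia.
rewrite contZ_fwd.
have E : m.+1%:Z - 1 = m%:Z by lia.
rewrite E in h2.
set L2 := contZ c x a m. set L1 := contZ c x a (m%:Z - 1).
have -> : - c * pp a * (x (a + m%:Z) * L2 + c * L1)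
   = x (a + m%:Z) * (- c * pp a * L2) + c * (- c * pp a * L1) by ring.
rewrite h1 h2.
have -> : n%:Z + 2 - m%:Z = ((n.+1 - m)%N.+1)%:Z by lia.
rewrite contZ_bwd.
have -> : ((n.+1 - m)%N%:Z - 1) = n%:Z + 2 - m.+2%:Z by lia.
have -> : (n.+1 - m)%N%:Z = n%:Z + 2 - m.+1%:Z by lia.
have -> : a + m%:Z + 1 = a + m.+1%:Z by lia.
have -> : a + m%:Z + 2 = a + m.+2%:Z by lia.
rewrite !exprS; ring.
Qed.

Hypothesis hc : c != 0.

Lemma nc0 : - c != 0.
Proof. by rewrite oppr_eq0. Qed.

Lemma pp_prod (a : int) : pp a * pp (a - 1) = (- c) ^+ n.+1.
Proof.
have := @key a n.+2 (leqnSn n.+2).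
have -> : (n.+2%:Z - 1) = n.+1%:Z by lia.
have -> : n%:Z + 2 - n.+2%:Z = 0 by lia.
change (contZ c x a n.+1%:Z) with (cont c x a n.+1).
change (contZ c x (a + n.+2%:Z) 0) with (1:K). rewrite mulr1.
have -> : cont c x a n.+1 = pp (a - 1) by rewrite /pp; congr cont; lia.
rewrite exprS -mulrA; exact: (mulfI nc0).
Qed.

Lemma pp_neq0 (a : int) : pp a != 0.
Proof.
apply/negP => /eqP h; move: (pp_prod a); rewrite h mul0r => /esym/eqP.
by rewrite expf_eq0 (negPf nc0) andbF.
Qed.

Lemma pp_per (a : int) : pp (a + 2) = pp a.
Proof.
have h1 := pp_prod (a + 2); have h2 := pp_prod (a + 1).
have e1 : a + 2 - 1 = a + 1 by lia. rewrite e1 in h1.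
have e : a + 1 - 1 = a by lia.
rewrite e in h2.
apply: (mulIf (pp_neq0 (a + 1))).
by rewrite h1 mulrC h2.
Qed.

Lemma pp_per2 (a : int) (j : nat) : pp (a + 2 * j%:Z) = pp a.
Proof.
elim: j => [|j IH]; first by rewrite mulr0 addr0.
have -> : a + 2 * j.+1%:Z = a + 2 * j%:Z + 2 by lia.
by rewrite pp_per.
Qed.

Lemma pp_perZ (a i : int) : pp (a + 2 * i) = pp a.
Proof.
case: (lerP 0 i) => hi.
  have -> : i = (absz i)%:Z by lia.
  exact: pp_per2.
have := pp_per2 (a + 2 * i) (absz i).
have -> : a + 2 * i + 2 * (absz i)%:Z = a by lia.
by move=> ->.
Qed.

End Aux.

Theorem mainTheorem10 (K : fieldType) (c : K) (n : nat) (f : int -> int -> K) :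
  c != 0 -> (1 <= n)%N -> is_frieze c n f ->
  let s := f 0 n%:Z in
  let t := f 1 (n%:Z + 1) in
  forall (k i : int), -1 <= k -> k <= n%:Z + 2 ->
    f (2 * i) (2 * i + k - 1) = (- c) ^ k / t * f (2 * i + k + 1) (2 * i + n%:Z + 1)
    /\ f (2 * i + 1) (2 * i + k) = (- c) ^ k / s * f (2 * i + k + 2) (2 * i + n%:Z + 2).
Proof.
move=> hc hn [x [adm hf]] s t k i hk1 hk2.
have [m hm] : exists m : nat, k = m%:Z - 1 by exists (absz (k+1)); lia.
have hmn : (m <= n.+3)%N by lia.
have ht : t = pp K c x n 0.
  rewrite /t hf; last by rewrite /inB; apply/andP; split; lia.
  have -> : n%:Z + 1 - 1 + 1 = n.+1%:Z by lia.
  by rewrite /pp add0r.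
have hs : s = pp K c x n (-1).
  rewrite /s hf; last by rewrite /inB; apply/andP; split; lia.
  have -> : n%:Z - 0 + 1 = n.+1%:Z by lia.
  by rewrite /pp; congr cont; lia.
have ck : (- c) ^ k = (- c) ^+ m / (- c).
  by rewrite hm expfzDr ?(nc0 K c hc) // exprN1 exprnP.
have ncz := nc0 K c hc.
split.
  rewrite hf; last by rewrite /inB; apply/andP; split; lia.
  rewrite [f (_ + k + 1) _]hf; last by rewrite /inB; apply/andP; split; lia.
  have key0 := key K c x n adm (2 * i) m hmn.
  have e0 := pp_perZ K c x n adm hc 0 i; rewrite add0r in e0; rewrite e0 in key0.
  have -> : 2 * i + k - 1 - 2 * i + 1 = m%:Z - 1 by lia.
  have -> : 2 * i + k + 1 = 2 * i + m%:Z by lia.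
  have -> : 2 * i + n%:Z + 1 - (2 * i + m%:Z) + 1 = n%:Z + 2 - m%:Z by lia.
  rewrite ck ht.
  have hp := pp_neq0 K c x n adm hc 0.
  set W := contZ c x _ (n%:Z + 2 - m%:Z).
  have -> : (- c) ^+ m / - c / pp K c x n 0 * W = ((- c) ^+ m * W) / (- c * pp K c x n 0)
    by rewrite invfM; ring.
  by rewrite -key0 [RHS]mulrC mulKf //; exact: mulf_neq0.
rewrite hf; last by rewrite /inB; apply/andP; split; lia.
rewrite [f (_ + k + 2) _]hf; last by rewrite /inB; apply/andP; split; lia.
have key0 := key K c x n adm (2 * i + 1) m hmn.
have e1 : -1 + 2 * (i + 1) = 2 * i + 1 by lia.
have e0 := pp_perZ K c x n adm hc (-1) (i+1); rewrite e1 in e0; rewrite e0 in key0.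
have -> : 2 * i + k - (2 * i + 1) + 1 = m%:Z - 1 by lia.
have -> : 2 * i + k + 2 = 2 * i + 1 + m%:Z by lia.
have -> : 2 * i + n%:Z + 2 - (2 * i + 1 + m%:Z) + 1 = n%:Z + 2 - m%:Z by lia.
rewrite ck hs.
have hp := pp_neq0 K c x n adm hc (-1).
set W := contZ c x _ (n%:Z + 2 - m%:Z).
have -> : (- c) ^+ m / - c / pp K c x n (-1) * W = ((- c) ^+ m * W) / (- c * pp K c x n (-1))
  by rewrite invfM; ring.
by rewrite -key0 [RHS]mulrC mulKf //; exact: mulf_neq0.
Qed.
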